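(* For $n\ge 6$ consider partitions of $n$ with parts $q_1\ge q_2\ge\dots\ge q_h$ such that $h\ge 3$, $q_j-q_{j+1}\in\{0,1\}$ for all $1\le j<h$, $q_1=q_2$, and $q_{h-1}=q_h=3$. Let $e''(n)$ (resp. $o''(n)$) be the number of such partitions with an even (resp. odd) number $h$ of parts. For an integer $t$ put $P_1(t)=\tfrac12(3t^2+t+4)$, $P_2(t)=\tfrac12(3(t+1)^2-t-1)$, $P_3(t)=\tfrac12(3(t+1)^2-t+3)$, $P_4(t)=\tfrac12(3(t+1)^2+t+1)$. Then for every integer $n\ge 6$: (a) $e''(n)=o''(n)$ if $n\notin\{P_1(t),P_2(t),P_3(t),P_4(t)\}$ for every integer $t\ge 2$; (b) $e''(n)=o''(n)-1$ if $n=P_1(t)$ or $n=P_4(t)$ for some integer $t\ge 2$; (c) $e''(n)=o''(n)+1$ if $n=P_2(t)$ or $n=P_3(t)$ for some integer $t\ge 2$. *)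

(* Defs.v *)
From mathcomp Require Import all_boot.
Set Implicit Arguments. Unset Strict Implicit. Unset Printing Implicit Defensive.

Definition good_partition (n : nat) (s : seq nat) : bool :=
  [&& sumn s == n,
      all (fun a => 0 < a) s,
      3 <= size s,
      sorted (fun a b => (b <= a) && (a <= b.+1)) s,
      nth 0 s 0 == nth 0 s 1,
      nth 0 s (size s - 2) == 3
    & last 0 s == 3].

Fixpoint seqs_len (k m : nat) : seq (seq nat) :=
  match k with
  | 0 => [:: [::]]
  | k'.+1 => [seq a :: s | a <- iota 1 m, s <- seqs_len k' m]
  end.

(* All sequences of length <= n with entries in {1, ..., n}: this contains
   every partition of n (each part is <= n and there are <= n parts),
   without repetitions. *)
Definition cand_seqs (n : nat) : seq (seq nat) :=
  flatten [seq seqs_len k n | k <- iota 0 n.+1].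

Definition e2 (n : nat) : nat :=
  count (fun s => good_partition n s && ~~ odd (size s)) (cand_seqs n).
Definition o2 (n : nat) : nat :=
  count (fun s => good_partition n s && odd (size s)) (cand_seqs n).

(* The four quadratic polynomials (all numerators are even for t >= 0). *)
Definition P1 (t : nat) : nat := (3 * t ^ 2 + t + 4) %/ 2.
Definition P2 (t : nat) : nat := (3 * (t + 1) ^ 2 - t - 1) %/ 2.
Definition P3 (t : nat) : nat := (3 * (t + 1) ^ 2 - t + 3) %/ 2.
Definition P4 (t : nat) : nat := (3 * (t + 1) ^ 2 + t + 1) %/ 2.

(* Main.v *)
Require Import Defs.
From mathcomp Require Import all_boot zify.

Lemma mem_seqs_len k m s : (s \in seqs_len k m) = (size s == k) && all (fun x => 0 < x <= m) s.
Proof.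
elim: k s => [|k IH] [|a s].
- by [].
- by rewrite /= inE.
- apply/allpairsP => -[[x y] [_ _ /=]] //.
- apply/allpairsP/idP => [[[x y] [/= xin yin [-> ->]]] | ].
    by rewrite mem_iota IH in xin yin *; move: xin yin => /= /andP[-> ?] /andP[/eqP -> ->]; rewrite eqxx; lia.
  move=> /= /andP [sk /andP [am alls]].
  exists (a, s); split => //=. rewrite mem_iota; lia. by rewrite IH alls andbT.
Qed.

Lemma uniq_seqs_len k m : uniq (seqs_len k m).
Proof.
elim: k => [|k IH] //=. apply: allpairs_uniq => //. exact: iota_uniq.
by move=> [x y] [x' y'] _ _ /= [-> ->].
Qed.

Lemma uniq_flat lo len m : uniq (flatten [seq seqs_len k m | k <- iota lo len]).
Proof.
elim: len lo => [|len IH] lo //=. rewrite cat_uniq uniq_seqs_len IH andbT /=.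
apply/hasPn => s /flattenP [l /mapP [k kin ->]] sin.
move: sin; rewrite !mem_seqs_len => /andP [/eqP sk _].
rewrite mem_iota in kin. rewrite sk; apply/negP => /andP [/eqP ? _]; lia.
Qed.

Lemma uniq_cand n : uniq (cand_seqs n).
Proof. exact: uniq_flat. Qed.

Lemma cand_in n s : size s <= n -> all (fun x => 0 < x <= n) s -> s \in cand_seqs n.
Proof.
move=> hs ha. apply/flattenP. exists (seqs_len (size s) n).
  apply/mapP; exists (size s) => //; rewrite mem_iota; lia.
by rewrite mem_seqs_len eqxx.
Qed.

Lemma pos_size s : all (fun x => 0 < x) s -> size s <= sumn s.
Proof. elim: s => //= a s IH /andP [a0 /IH]; lia. Qed.

Lemma le_sumn s x : x \in s -> x <= sumn s.
Proof. elim: s => //= a s IH; rewrite inE => /orP [/eqP -> | /IH]; lia. Qed.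

Definition stepR : rel nat := fun x y => (x <= y) && (y <= x.+1).
Fixpoint isQ (b : nat) (r : seq nat) : bool :=
  if r is x :: r' then (x == b) && ((r' == [:: b]) || isQ b r' || isQ b.+1 r') else false.
Definition lastTwo (r : seq nat) := nth 0 r (size r).-1 == nth 0 r (size r).-2.

Lemma stepR_b b y : stepR b y = (y == b) || (y == b.+1).
Proof. rewrite /stepR; case: (ltngtP y b) => h; case: (ltngtP y b.+1) => h'; lia. Qed.

Lemma isQ_char r : forall b, isQ b r = [&& head 0 r == b, 1 < size r, sorted stepR r & lastTwo r].
Proof.
elim: r => [|x r IH] b; first by rewrite /= andbF.
case: r IH => [|y [|z r]] IH.
- by rewrite /= andbF.
- rewrite /= /lastTwo /= !andbF !orbF andbT.
  case: (x =P b) => [->|] //=. rewrite stepR_b eqseq_cons andbT. by case: (y == b); rewrite ?orbT ?andbF.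
- rewrite /= -/(isQ b (y :: z :: r)) -/(isQ b.+1 (y :: z :: r)) !IH.
  rewrite /lastTwo /=.
  case: (x =P b) => [->|] //=.
  rewrite eqseq_cons /= andbF.
  move: (path stepR z r) (nth 0 (z :: r) (size r) == _) (stepR y z) => P L Z.
  rewrite stepR_b. by case: (y == b); case: (y == b.+1); case: P; case: L; case: Z.
Qed.

Lemma pathpos t : forall z, 0 < z -> path stepR z t -> all (fun x => 0 < x) t.
Proof. elim: t => [|a t IH] z hz //= /andP [ha hp]. rewrite /stepR in ha. rewrite (IH a) //; lia. Qed.

Definition isG (r : seq nat) := if r is x :: r' then (x == 3) && isQ 3 r' else false.

Lemma good_rev n r : good_partition n (rev r) = (sumn r == n) && isG r.
Proof.
rewrite /good_partition sumn_rev all_rev size_rev rev_sorted.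
case: r => [|x r]; first by rewrite /= !andbF.
rewrite [isG _]/= isQ_char.
case: r => [|y [|z t]]; [by rewrite /= !andbF | by rewrite /= !andbF | ].
rewrite -nth_last size_rev !nth_rev //= subnn.
rewrite (_ : (size t).+3 - ((size t).+3 - 2).+1 = 1); last by lia.
rewrite /lastTwo /=.
have -> : path (fun z0 x0 : nat => z0 <= x0 <= z0.+1) z t = path stepR z t by [].
move: (nth 0 (z :: t) (size t) == nth 0 [:: y, z & t] (size t)) => L.
case: (x =P 3) => [->|/eqP/negbTE nx]; last by rewrite !andbF.
case: (y =P 3) => [->|/eqP/negbTE ny]; last by rewrite !andbF.
rewrite /= !andbT.
case Hs: (stepR 3 z); last by rewrite /stepR in Hs; rewrite Hs /= !andbF.
case HP: (path stepR z t); last by rewrite /stepR in Hs *; rewrite Hs /= !andbF.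
rewrite (pathpos _ _ _ HP); last by move: Hs; rewrite /stepR; lia.
move: Hs; rewrite /stepR => Hs. rewrite Hs /=. have -> : 0 < z by lia. by [].
Qed.

Fixpoint genQ (f b m : nat) : seq (seq nat) :=
  if f is f'.+1 then
    if (0 < b) && (b <= m) then
      [seq b :: r | r <- (if m - b == b then [:: [:: b]] else [::]) ++ genQ f' b (m - b) ++ genQ f' b.+1 (m - b)]
    else [::]
  else [::].

Lemma mem_map_cons (b x : nat) r (L : seq (seq nat)) : (x :: r \in [seq b :: r | r <- L]) = (x == b) && (r \in L).
Proof.
apply/mapP/andP => [[r' rin [-> ->]]|[/eqP -> rin]]; first by rewrite eqxx.
by exists r.
Qed.

Lemma mem_genQ f : forall b m r, 0 < b -> m < f -> (r \in genQ f b m) = isQ b r && (sumn r == m).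
Proof.
elim: f => [|f IH] b m r hb hm; first by [].
rewrite /=. case: r => [|x r].
  by case: ifP => // _; apply/mapP => -[? _].
rewrite hb /=. case: (leqP b m) => hbm /=; last first.
  rewrite andbC. case: (x =P b) => [->|]; last by rewrite andbF.
  by have -> : (b + sumn r == m) = false by apply/negbTE; lia.
rewrite mem_map_cons !mem_cat !IH //; try lia.
case: (x =P b) => [->|] //=.
have E : (b + sumn r == m) = (sumn r == m - b) by apply/eqP/eqP; lia.
rewrite E.
case: (r =P [:: b]) => [->|nr] /=.
  rewrite addn0 !andbF /= !orbF.
  case: (m - b =P b) => [->|ne]; first by rewrite inE !eqxx.
  rewrite in_nil. apply/esym/eqP => h. apply: ne. by rewrite -h.
case: ifP => _; rewrite ?inE; last by rewrite /= andb_orl.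
have -> : (r == [:: b]) = false by apply/eqP.
by rewrite /= andb_orl.
Qed.

Lemma genQ_shape f : forall b m r, r \in genQ f b m -> exists2 r', r = b :: r' & r' != [::].
Proof.
elim: f => [|f IH] b m r //=. case: ifP => // _.
move=> /mapP [r' rin ->]. exists r' => //.
move: rin; rewrite !mem_cat => /orP [|/orP [] /IH [r'' -> _] //].
by case: ifP => // _; rewrite inE => /eqP ->.
Qed.

Lemma uniq_genQ f : forall b m, uniq (genQ f b m).
Proof.
elim: f => [|f IH] b m //=. case: ifP => // _.
rewrite map_inj_uniq; last by move=> ? ? [].
rewrite !cat_uniq !IH /= andbT.
have h1 : ~~ has (mem (genQ f b (m - b))) (genQ f b.+1 (m - b)).
  apply/hasPn => r /genQ_shape [r' -> _]. apply/negP => /genQ_shape [r'' [] e _]. lia.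
rewrite h1 andbT.
case: ifP => _ //=; last by apply/hasPn.
apply/hasPn => r. rewrite mem_cat => /orP [] /genQ_shape [r' -> ne]; rewrite inE.
  apply/negP => /eqP [] e. by rewrite e in ne.
apply/negP => /eqP [] e. lia.
Qed.

Lemma genQ_fuel f1 : forall f2 b m, 0 < b -> m < f1 -> m < f2 -> genQ f1 b m = genQ f2 b m.
Proof.
elim: f1 => [|f1 IH] [|f2] b m hb h1 h2 //=.
case: ifP => // /andP [_ hbm].
by rewrite (IH f2 b) ?(IH f2 b.+1) //; lia.
Qed.

Lemma count_good n (a : pred nat) : 3 <= n ->
  count (fun s => good_partition n s && a (size s)) (cand_seqs n) =
  count (fun r => a (size r).+1) (genQ (n - 3).+1 3 (n - 3)).
Proof.
move=> hn.
set G := genQ (n - 3).+1 3 (n - 3).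
have -> : count (fun s => good_partition n s && a (size s)) (cand_seqs n) =
          count (fun s => a (size s)) (filter (good_partition n) (cand_seqs n)).
  by rewrite count_filter; apply: eq_count => s; rewrite /= andbC.
have P : perm_eq (filter (good_partition n) (cand_seqs n)) (map (fun r => rev (3 :: r)) G).
  apply: uniq_perm.
  - exact: filter_uniq (uniq_cand n).
  - rewrite map_inj_uniq; first exact: uniq_genQ.
    by move=> r1 r2 /(congr1 rev); rewrite !revK => -[].
  move=> s. rewrite mem_filter. apply/andP/mapP.
  - move=> [hg _]. move: hg. rewrite -[s]revK good_rev.
    case E: (rev s) => [|x r] /=; first by rewrite andbF.
    move=> /and3P [hs /eqP hx hq].
    exists r; last by rewrite hx.
    rewrite /G mem_genQ // hq /=. move/eqP: hs => hs. apply/eqP. rewrite hx in hs. lia.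
  - move=> [r rin ->]. have := rin; rewrite /G mem_genQ //.
    move=> /andP [hq hs].
    have hg : good_partition n (rev (3 :: r)).
      rewrite good_rev /= hq andbT. move/eqP: hs => hs. apply/eqP. lia.
    rewrite hg; split => //.
    move: (hg); rewrite /good_partition => /andP [/eqP hsum /andP [hp _]].
    apply: cand_in; first by rewrite -hsum; exact: pos_size.
    apply/allP => x xin. move/allP: hp => /(_ x xin) ->. by rewrite -hsum le_sumn.
move/permP: P => ->. rewrite count_map. apply: eq_count => r. by rewrite /= size_rev.
Qed.

From Stdlib Require Import ZArith Lia.
Lemma half_even (x : nat) (y : nat) : x = (2 * y)%nat -> (x %/ 2 = y)%nat.
Proof. move=> ->. by rewrite mulKn. Qed.
Lemma P1Z t : (2 * Z.of_nat (P1 t) = 3 * Z.of_nat t * Z.of_nat t + 1 * Z.of_nat t + 4)%Z.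
Proof.
have [j [-> | ->]] : exists j, t = (2 * j)%nat \/ t = (2 * j).+1.
  exists t./2. have := odd_double_half t. case: (odd t) => /= h; [right|left]; rewrite -muln2 in h; lia.
- rewrite /P1 (@half_even _ (6*j*j + j + 2)%nat); lia.
- rewrite /P1 (@half_even _ (6*j*j + 7 * j + 4)%nat); lia.
Qed.
Lemma P2Z t : (2 * Z.of_nat (P2 t) = 3 * Z.of_nat t * Z.of_nat t + 5 * Z.of_nat t + 2)%Z.
Proof.
have [j [-> | ->]] : exists j, t = (2 * j)%nat \/ t = (2 * j).+1.
  exists t./2. have := odd_double_half t. case: (odd t) => /= h; [right|left]; rewrite -muln2 in h; lia.
- rewrite /P2 (@half_even _ (6*j*j + 5 * j + 1)%nat); lia.
- rewrite /P2 (@half_even _ (6*j*j + 11 * j + 5)%nat); lia.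
Qed.
Lemma P3Z t : (2 * Z.of_nat (P3 t) = 3 * Z.of_nat t * Z.of_nat t + 5 * Z.of_nat t + 6)%Z.
Proof.
have [j [-> | ->]] : exists j, t = (2 * j)%nat \/ t = (2 * j).+1.
  exists t./2. have := odd_double_half t. case: (odd t) => /= h; [right|left]; rewrite -muln2 in h; lia.
- rewrite /P3 (@half_even _ (6*j*j + 5 * j + 3)%nat); lia.
- rewrite /P3 (@half_even _ (6*j*j + 11 * j + 7)%nat); lia.
Qed.
Lemma P4Z t : (2 * Z.of_nat (P4 t) = 3 * Z.of_nat t * Z.of_nat t + 7 * Z.of_nat t + 4)%Z.
Proof.
have [j [-> | ->]] : exists j, t = (2 * j)%nat \/ t = (2 * j).+1.
  exists t./2. have := odd_double_half t. case: (odd t) => /= h; [right|left]; rewrite -muln2 in h; lia.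
- rewrite /P4 (@half_even _ (6*j*j + 7 * j + 2)%nat); lia.
- rewrite /P4 (@half_even _ (6*j*j + 13 * j + 7)%nat); lia.
Qed.
Open Scope Z_scope.


Definition dl (n : Z) : Z := if Z.eqb n 0 then 1 else 0.
Fixpoint gf (fu : nat) (a b : nat) (n : Z) : Z :=
  match fu with
  | O => 0
  | S f => if Z.ltb n 0 then 0
           else dl n - gf f a b (n - Z.of_nat b) - gf f a (S b) (n - Z.of_nat a - Z.of_nat b)
  end.
Definition g a b n := gf (S (Z.to_nat n)) a b n.

Lemma gf_neg f a b n : n < 0 -> gf f a b n = 0.
Proof. destruct f; simpl; auto. intros H. destruct (Z.ltb_spec n 0); lia. Qed.

Lemma gf_stable : forall f1 f2 a b n, (1 <= b)%coq_nat -> n < Z.of_nat f1 -> n < Z.of_nat f2 ->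
  gf f1 a b n = gf f2 a b n.
Proof.
induction f1 as [|f1 IH]; intros f2 a b n Hb H1 H2.
- rewrite !gf_neg; try lia.
- destruct f2 as [|f2]; [rewrite !gf_neg; try lia|].
  simpl. destruct (Z.ltb_spec n 0); auto.
  rewrite (IH f2 a b); try lia. rewrite (IH f2 a (S b)); try lia.
Qed.

Lemma g_neg a b n : n < 0 -> g a b n = 0.
Proof. intros; unfold g; apply gf_neg; auto. Qed.

Lemma dl_neg n : n <> 0 -> dl n = 0.
Proof. unfold dl; destruct (Z.eqb_spec n 0); lia. Qed.
Lemma dl_0 : dl 0 = 1. Proof. reflexivity. Qed.

Lemma g_rec a b n : (1 <= b)%coq_nat ->
  g a b n = dl n - g a b (n - Z.of_nat b) - g a (S b) (n - Z.of_nat a - Z.of_nat b).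
Proof.
intros Hb. destruct (Z.ltb_spec n 0).
- rewrite !g_neg; try lia. rewrite dl_neg; lia.
- unfold g at 1. simpl. destruct (Z.ltb_spec n 0); try lia.
  unfold g. rewrite (gf_stable _ (S (Z.to_nat (n - Z.of_nat b)))); try lia.
  rewrite (gf_stable (Z.to_nat n) (S (Z.to_nat (n - Z.of_nat a - Z.of_nat b)))); try lia.
Qed.

Lemma g_rec' a b n m1 m2 : (1 <= b)%coq_nat -> m1 = n - Z.of_nat b -> m2 = n - Z.of_nat a - Z.of_nat b ->
  g a b n = dl n - g a b m1 - g a (S b) m2.
Proof. intros Hb -> ->; apply g_rec; auto. Qed.

Lemma zind (P : Z -> Prop) : (forall n, n < 0 -> P n) ->
  (forall n, 0 <= n -> (forall m, m < n -> P m) -> P n) -> forall n, P n.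
Proof.
intros Hneg Hstep.
assert (forall N : nat, forall n, n < Z.of_nat N -> P n).
{ induction N as [|N IH]; intros n Hn.
  - apply Hneg; lia.
  - destruct (Z.ltb_spec n 0). apply Hneg; auto.
    apply Hstep; auto. intros m Hm. apply IH; lia. }
intros n. apply (H (S (Z.to_nat n))); lia.
Qed.

Lemma R1' a : forall n b m1 m2, (1 <= b)%coq_nat -> m1 = n - Z.of_nat b -> m2 = n - Z.of_nat a - Z.of_nat b ->
  g a b n + g (S a) b m1 + g (S a) b m2 = dl n.
Proof.
intros n. pattern n. apply zind; clear n.
- intros n Hn b m1 m2 Hb -> ->. rewrite !g_neg; try lia. rewrite dl_neg; lia.
- intros n Hn IH b m1 m2 Hb -> ->.
  set (A := Z.of_nat a). set (B := Z.of_nat b).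
  assert (HA : 0 <= A) by lia. assert (HB : 1 <= B) by lia.
  have e1 := g_rec' a b n (n - B) (n - A - B) Hb ltac:(lia) ltac:(lia).
  have e2 := g_rec' (S a) b (n - B) (n - B - B) (n - A - B - B - 1) Hb ltac:(lia) ltac:(lia).
  have e3 := g_rec' (S a) b (n - A - B) (n - A - B - B) (n - A - A - B - B - 1) Hb ltac:(lia) ltac:(lia).
  have i1 := IH (n - B) ltac:(lia) b (n - B - B) (n - A - B - B) Hb ltac:(lia) ltac:(lia).
  have i2 := IH (n - A - B) ltac:(lia) (S b) (n - A - B - B - 1) (n - A - A - B - B - 1) ltac:(lia) ltac:(lia) ltac:(lia).
  lia.
Qed.

Lemma R1 a b n : (1 <= b)%coq_nat ->
  g a b n + g (S a) b (n - Z.of_nat b) + g (S a) b (n - Z.of_nat a - Z.of_nat b) = dl n.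
Proof. intros; apply R1'; auto. Qed.

Lemma Drec' a : (1 <= a)%coq_nat -> forall n m1 m2, m1 = n - Z.of_nat a -> m2 = n - 3 * Z.of_nat a - 1 ->
  g a a n = dl n - dl m1 + g (S a) (S a) m2.
Proof.
intros Ha n. pattern n. apply zind; clear n.
- intros n Hn m1 m2 -> ->. rewrite !g_neg; try lia. rewrite !dl_neg; lia.
- intros n Hn IH m1 m2 -> ->.
  set (A := Z.of_nat a). assert (HA : 1 <= A) by lia.
  have e1 := g_rec' a a n (n - A) (n - A - A) Ha ltac:(lia) ltac:(lia).
  have r := R1' a (n - A - A) (S a) (n - A - A - A - 1) (n - A - A - A - A - 1) ltac:(lia) ltac:(lia) ltac:(lia).
  have i1 := IH (n - A) ltac:(lia) (n - A - A) (n - A - A - A - A - 1) ltac:(lia) ltac:(lia).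
  replace (n - 3 * A - 1) with (n - A - A - A - 1) by lia.
  lia.
Qed.

Fixpoint sq (k a : nat) : nat := match k with O => O | S k' => (3*a+1 + sq k' (S a))%nat end.

Lemma sq_closed k : forall a, 2 * Z.of_nat (sq k a) = 6 * Z.of_nat a * Z.of_nat k + 3 * Z.of_nat k * Z.of_nat k - Z.of_nat k.
Proof. induction k as [|k IH]; intros a; simpl sq. lia. have h := IH (S a). rewrite !Nat2Z.inj_add. rewrite Nat2Z.inj_succ in h. nia. Qed.

Lemma sq_S k a : Z.of_nat (sq (S k) a) = 3 * Z.of_nat a + 1 + Z.of_nat (sq k (S a)).
Proof. simpl sq. lia. Qed.

Lemma D1 k : forall a, (1 <= a)%coq_nat -> g a a (Z.of_nat (sq k a)) = 1.
Proof.
induction k as [|k IH]; intros a Ha.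
- simpl sq. change (Z.of_nat 0) with 0. rewrite (Drec' a Ha 0 (- Z.of_nat a) (- 3 * Z.of_nat a - 1)); try lia.
  rewrite dl_0 (dl_neg (- Z.of_nat a)); try lia. rewrite g_neg; lia.
- rewrite sq_S. set (X := Z.of_nat (sq k (S a))).
  rewrite (Drec' a Ha _ (2 * Z.of_nat a + 1 + X) X); try lia.
  rewrite !dl_neg; try lia. subst X. rewrite IH; lia.
Qed.

Lemma D2 k : forall a, (1 <= a)%coq_nat -> g a a (Z.of_nat (sq k a) + Z.of_nat a + Z.of_nat k) = -1.
Proof.
induction k as [|k IH]; intros a Ha.
- simpl sq. change (Z.of_nat 0) with 0. rewrite (Drec' a Ha _ 0 (- 2 * Z.of_nat a - 1)); try lia.
  rewrite dl_neg; try lia. rewrite g_neg; try lia. rewrite dl_0. lia.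
- rewrite sq_S. set (X := Z.of_nat (sq k (S a))).
  rewrite (Drec' a Ha _ (3 * Z.of_nat a + 1 + X + Z.of_nat (S k)) (X + Z.of_nat (S a) + Z.of_nat k)); try lia.
  rewrite !dl_neg; try lia. subst X. rewrite IH; lia.
Qed.

Lemma D3 a : (1 <= a)%coq_nat -> forall n, (forall k, n <> Z.of_nat (sq k a) /\ n <> Z.of_nat (sq k a) + Z.of_nat a + Z.of_nat k) ->
  g a a n = 0.
Proof.
intros Ha n. revert a Ha. pattern n. apply zind; clear n.
- intros n Hn a Ha _. apply g_neg; auto.
- intros n Hn IH a Ha H.
  rewrite (Drec' a Ha n (n - Z.of_nat a) (n - 3 * Z.of_nat a - 1)); try lia.
  destruct (H 0%nat) as [H1 H2]. simpl in H1, H2.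
  rewrite !dl_neg; try lia.
  rewrite IH; try lia.
  intros k. destruct (H (S k)) as [H3 H4]. rewrite sq_S in H3, H4. lia.
Qed.

Lemma sq_le (x y : Z) : 0 <= x -> x <= y -> x*x <= y*y.
Proof. intros; nia. Qed.

Ltac sepj j k := destruct (Z.lt_total j k) as [Hl|[He|Hg]];
  [have := sq_le j (k-1) ltac:(lia) ltac:(lia); lia
  | (have : j*j = k*k by rewrite He); lia
  | have := sq_le (k+1) j ltac:(lia) ltac:(lia); lia].

Lemma g33_zero (x : Z) : (forall j : nat, x <> Z.of_nat (sq j 3) /\ x <> Z.of_nat (sq j 3) + 3 + Z.of_nat j) -> g 3 3 x = 0.
Proof. intros H. apply D3; [lia|]. intros k. exact (H k). Qed.

Lemma final_arith (n : nat) (hn : (6 <= n)%nat) (F : Z) (HF : F = - g 2 3 (Z.of_nat n - 9)) :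
  [/\ (forall t, (2 <= t)%nat -> [/\ n <> P1 t, n <> P2 t, n <> P3 t & n <> P4 t]) -> F = 0,
      (exists t, (2 <= t)%nat /\ (n = P1 t \/ n = P4 t)) -> F = -1
    & (exists t, (2 <= t)%nat /\ (n = P2 t \/ n = P3 t)) -> F = 1].
Proof.
have r := R1' 2 (Z.of_nat n - 9) 3 (Z.of_nat n - 12) (Z.of_nat n - 14) ltac:(lia) ltac:(lia) ltac:(lia).
have eF : F = - dl (Z.of_nat n - 9) + g 3 3 (Z.of_nat n - 12) + g 3 3 (Z.of_nat n - 14) by lia.
clear HF r. rewrite eF; clear eF.
have sqc : forall j, 2 * Z.of_nat (sq j 3) = 3 * Z.of_nat j * Z.of_nat j + 17 * Z.of_nat j.
  intros j. rewrite sq_closed. lia.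
split.
- move=> H.
  rewrite dl_neg; last first.
    have [h1 _ _ _] := H 2%nat isT. have := P1Z 2. lia.
  rewrite !g33_zero; try lia.
  + intros j. have [h1 _ _ _] := H (j + 3)%nat ltac:(lia). have := P3Z (j + 2). have := P1Z (j + 3).
    have [_ h2 h3 h4'] := H (j + 2)%nat ltac:(lia). have := P2Z (j + 2). have := P4Z (j + 2). have := sqc j. split; lia.
  + intros j. have [h1 _ _ _] := H (j + 3)%nat ltac:(lia). have := P3Z (j + 2). have := P1Z (j + 3).
    have [_ h2 h3 h4'] := H (j + 2)%nat ltac:(lia). have := P2Z (j + 2). have := P4Z (j + 2). have := sqc j. split; lia.
- move=> [t [ht [->|->]]].
  + case: (ltngtP t 2) => [|h|h]; [lia| |].
    * set k := (t - 3)%nat. have ek : t = (k + 3)%nat by lia. rewrite ek.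
      have p := P1Z (k + 3). have sk := sqc k.
      rewrite dl_neg; [|lia].
      rewrite (g33_zero (Z.of_nat (P1 (k+3)) - 12)).
      { have -> : Z.of_nat (P1 (k + 3)) - 14 = Z.of_nat (sq k 3) + Z.of_nat 3 + Z.of_nat k by lia.
        rewrite D2; lia. }
      intros j. have sj := sqc j. 
      split; intro E. 
      { assert (3*Z.of_nat k*Z.of_nat k + 19*Z.of_nat k + 10 = 3*Z.of_nat j*Z.of_nat j + 17*Z.of_nat j) by lia. sepj (Z.of_nat j) (Z.of_nat k). }
      { assert (3*Z.of_nat k*Z.of_nat k + 19*Z.of_nat k + 4 = 3*Z.of_nat j*Z.of_nat j + 19*Z.of_nat j) by lia. sepj (Z.of_nat j) (Z.of_nat k). }
    * subst t. have p := P1Z 2. rewrite (g_neg _ _ (_ - 12)); [|lia]. rewrite (g_neg _ _ (_ - 14)); [|lia].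
      have -> : Z.of_nat (P1 2) - 9 = 0 by lia. rewrite dl_0. lia.
  + set k := (t - 2)%nat. have ek : t = (k + 2)%nat by lia. rewrite ek.
    have p := P4Z (k + 2). have sk := sqc k.
    rewrite dl_neg; [|lia].
    rewrite (g33_zero (Z.of_nat (P4 (k+2)) - 14)).
    { have -> : Z.of_nat (P4 (k + 2)) - 12 = Z.of_nat (sq k 3) + Z.of_nat 3 + Z.of_nat k by lia.
      rewrite D2; lia. }
    intros j. have sj := sqc j. 
    split; intro E.
    { assert (3*Z.of_nat k*Z.of_nat k + 19*Z.of_nat k + 2 = 3*Z.of_nat j*Z.of_nat j + 17*Z.of_nat j) by lia. sepj (Z.of_nat j) (Z.of_nat k). }
    { assert (3*Z.of_nat k*Z.of_nat k + 19*Z.of_nat k - 4 = 3*Z.of_nat j*Z.of_nat j + 19*Z.of_nat j) by lia. sepj (Z.of_nat j) (Z.of_nat k). }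
- move=> [t [ht [->|->]]].
  + set k := (t - 2)%nat. have ek : t = (k + 2)%nat by lia. rewrite ek.
    have p := P2Z (k + 2). have sk := sqc k.
    rewrite dl_neg; [|lia].
    rewrite (g33_zero (Z.of_nat (P2 (k+2)) - 14)).
    { have -> : Z.of_nat (P2 (k + 2)) - 12 = Z.of_nat (sq k 3) by lia.
      rewrite D1; lia. }
    intros j. have sj := sqc j. 
    split; intro E.
    { assert (3*Z.of_nat k*Z.of_nat k + 17*Z.of_nat k - 4 = 3*Z.of_nat j*Z.of_nat j + 17*Z.of_nat j) by lia. sepj (Z.of_nat j) (Z.of_nat k). }
    { assert (3*Z.of_nat k*Z.of_nat k + 17*Z.of_nat k - 10 = 3*Z.of_nat j*Z.of_nat j + 19*Z.of_nat j) by lia. sepj (Z.of_nat j) (Z.of_nat k). }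
  + set k := (t - 2)%nat. have ek : t = (k + 2)%nat by lia. rewrite ek.
    have p := P3Z (k + 2). have sk := sqc k.
    rewrite dl_neg; [|lia].
    rewrite (g33_zero (Z.of_nat (P3 (k+2)) - 12)).
    { have -> : Z.of_nat (P3 (k + 2)) - 14 = Z.of_nat (sq k 3) by lia.
      rewrite D1; lia. }
    intros j. have sj := sqc j. 
    split; intro E.
    { assert (3*Z.of_nat k*Z.of_nat k + 17*Z.of_nat k + 4 = 3*Z.of_nat j*Z.of_nat j + 17*Z.of_nat j) by lia. sepj (Z.of_nat j) (Z.of_nat k). }
    { assert (3*Z.of_nat k*Z.of_nat k + 17*Z.of_nat k - 2 = 3*Z.of_nat j*Z.of_nat j + 19*Z.of_nat j) by lia. sepj (Z.of_nat j) (Z.of_nat k). }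
Qed.


Definition sgn (r : seq nat) : Z := if odd (size r) then -1 else 1.
Fixpoint sc (L : seq (seq nat)) : Z := if L is r :: L' then sgn r + sc L' else 0.

Lemma sc_cat L1 L2 : sc (L1 ++ L2) = sc L1 + sc L2.
Proof. elim: L1 => [|r L IH] /=; lia. Qed.

Lemma sc_map_cons b L : sc [seq b :: r | r <- L] = - sc L.
Proof. elim: L => [|r L IH] //=. rewrite IH /sgn /=. case: (odd (size r)); cbn [negb]; lia. Qed.

Lemma sc_count L : Z.of_nat (count (fun r => ~~ odd (size r)) L) - Z.of_nat (count (fun r => odd (size r)) L) = sc L.
Proof. elim: L => [|r L IH] //=. rewrite /sgn. case: (odd (size r)); cbn [negb]; lia. Qed.

Definition Qc b m := sc (genQ m.+1 b m).

Lemma genQ_S f b m : genQ f.+1 b m = if (0 < b)%nat && (b <= m)%nat then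
      [seq b :: r | r <- (if (m - b == b)%nat then [:: [:: b]] else [::]) ++ genQ f b (m - b)%nat ++ genQ f b.+1 (m - b)%nat]
    else [::].
Proof. by []. Qed.

Lemma Qc_rec b m : (0 < b)%nat -> Qc b m =
  if (b <= m)%nat then (if (m - b == b)%nat then 1 else 0) - Qc b (m - b) - Qc b.+1 (m - b) else 0.
Proof.
move=> hb. rewrite {1}/Qc genQ_S hb andTb. case: ifP => hbm; rewrite ?hbm //.
rewrite sc_map_cons !sc_cat.
rewrite (genQ_fuel m (m - b).+1 b) //; try lia.
rewrite (genQ_fuel m (m - b).+1 b.+1) //; try lia.
have e1 : sc [:: [:: b]] = -1 by [].
have e0 : sc [::] = 0 by [].
rewrite /Qc. case: ifP => _; rewrite ?e1 ?e0; lia.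
Qed.

Lemma gE a b x y : x = y -> g a b x = g a b y.
Proof. by move=> ->. Qed.

Lemma Qc_g m : forall b, (0 < b)%nat -> Qc b m = g 2 b (Z.of_nat m - 2 * Z.of_nat b).
Proof.
elim/ltn_ind: m => m IH b hb.
rewrite Qc_rec //. case: ifP => hbm.
- have e := g_rec' 2 b (Z.of_nat m - 2 * Z.of_nat b) (Z.of_nat m - 3 * Z.of_nat b) (Z.of_nat m - 3 * Z.of_nat b - 2)
     ltac:(lia) ltac:(lia) ltac:(lia).
  rewrite (IH (m - b)%nat) //; last by lia.
  rewrite (IH (m - b)%nat) //; last by lia.
  rewrite (gE 2 b _ (Z.of_nat m - 3 * Z.of_nat b)); last by lia.
  rewrite (gE 2 b.+1 _ (Z.of_nat m - 3 * Z.of_nat b - 2)); last by lia.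
  rewrite e. case: (m - b =P b)%nat => h.
  + rewrite (_ : Z.of_nat m - 2 * Z.of_nat b = 0); last by lia. rewrite dl_0. lia.
  + rewrite dl_neg; lia.
- rewrite g_neg //. lia.
Qed.

Lemma Fval n : (6 <= n)%nat -> Z.of_nat (e2 n) - Z.of_nat (o2 n) = - g 2 3 (Z.of_nat n - 9).
Proof.
move=> hn.
rewrite /e2 /o2 (count_good n (fun k => ~~ odd k)) ?(count_good n (fun k => odd k)); try lia.
have -> : count (fun r => ~~ odd (size r).+1) (genQ (n - 3).+1 3 (n - 3)) =
          count (fun r => odd (size r)) (genQ (n - 3).+1 3 (n - 3)).
  by apply: eq_count => r /=; rewrite negbK.
have -> : count (fun r => odd (size r).+1) (genQ (n - 3).+1 3 (n - 3)) =
          count (fun r => ~~ odd (size r)) (genQ (n - 3).+1 3 (n - 3)) by [].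
have h := sc_count (genQ (n - 3).+1 3 (n - 3)).
rewrite -/(Qc 3 (n - 3)) Qc_g // in h.
rewrite (gE 2 3 _ (Z.of_nat n - 9)) in h; lia.
Qed.

Close Scope Z_scope.

Theorem corollary4p10 (n : nat) (hn : 6 <= n) :
  [/\ (forall t, 2 <= t -> [/\ n <> P1 t, n <> P2 t, n <> P3 t & n <> P4 t]) ->
        e2 n = o2 n,
      (exists t, 2 <= t /\ (n = P1 t \/ n = P4 t)) -> e2 n + 1 = o2 n
    & (exists t, 2 <= t /\ (n = P2 t \/ n = P3 t)) -> e2 n = o2 n + 1].
Proof.
have [A B C] := final_arith n hn _ (Fval n hn).
split.
- move=> H. have := A H. lia.
- move=> H. have := B H. lia.
- move=> H. have := C H. lia.
Qed.
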